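(* Let $\mathcal{L}$ be a nonempty set and let $\mathcal{C}: 2^{\mathcal{L}} \to 2^{\mathcal{L}}$ be a C-logics. Then there is a restricted fC-model $\langle \mathcal{M}, \models, f\rangle$ for $\mathcal{L}$ such that $\mathcal{C}(A) = \overline{f(\widehat{A})}$ for every $A \subseteq \mathcal{L}$.
   Context: A C-logics on a nonempty set $\mathcal{L}$ is a map $\mathcal{C}: 2^{\mathcal{L}} \to 2^{\mathcal{L}}$ satisfying Inclusion ($A \subseteq \mathcal{C}(A)$ for all $A$) and Cumulativity ($A \subseteq B \subseteq \mathcal{C}(A) \Rightarrow \mathcal{C}(A) = \mathcal{C}(B)$). An fC-model for $\mathcal{L}$ is a triple $\langle \mathcal{M}, \models, f\rangle$ where $\mathcal{M}$ is any set, $\models \subseteq \mathcal{M}\times\mathcal{L}$ is any binary relation, and $f: 2^{\mathcal{M}} \to 2^{\mathcal{M}}$ is defined on all subsets of $\mathcal{M}$ and satisfies, for all $X, Y \subseteq \mathcal{M}$: Contraction $f(X) \subseteq X$, and Local Cumulativity $f(X) \subseteq Y \subseteq X \Rightarrow f(Y) = f(X)$. It is restricted if moreover $f(X) = \emptyset \Rightarrow X = \emptyset$ for all $X \subseteq \mathcal{M}$. For $A \subseteq \mathcal{L}$, $\widehat{A} = \{x \in \mathcal{M} : x \models a \ \forall a \in A\}$; for $X \subseteq \mathcal{M}$, $\overline{X} = \{a \in \mathcal{L} : x \models a \ \forall x \in X\}$. *)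

(* Defs.v *)
Definition subset {T : Type} (A B : T -> Prop) : Prop := forall x, A x -> B x.
Definition seteq {T : Type} (A B : T -> Prop) : Prop := forall x, A x <-> B x.

Definition C_logics {L : Type} (C : (L -> Prop) -> (L -> Prop)) : Prop :=
  (forall A, subset A (C A)) /\
  (forall A B, subset A B -> subset B (C A) -> seteq (C A) (C B)).

Definition fC_choice {M : Type} (f : (M -> Prop) -> (M -> Prop)) : Prop :=
  (forall X, subset (f X) X) /\
  (forall X Y, subset (f X) Y -> subset Y X -> seteq (f Y) (f X)).

Definition restricted {M : Type} (f : (M -> Prop) -> (M -> Prop)) : Prop :=
  forall X, (forall x, ~ f X x) -> (forall x, ~ X x).

Definition hat {M L : Type} (sat : M -> L -> Prop) (A : L -> Prop) : M -> Prop :=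
  fun x => forall a, A a -> sat x a.
Definition bar {M L : Type} (sat : M -> L -> Prop) (X : M -> Prop) : L -> Prop :=
  fun a => forall x, X x -> sat x a.

(* Main.v *)
Require Import Defs.
From Stdlib Require Import Classical.

Lemma C_ext {L : Type} (C : (L -> Prop) -> (L -> Prop)) :
  C_logics C -> forall A B, seteq A B -> seteq (C A) (C B).
Proof.
  intros [Hi Hc] A B H. apply Hc.
  - intros x Hx; apply H; exact Hx.
  - intros x Hx; apply Hi; apply H; exact Hx.
Qed.

Theorem theorem2 (L : Type) (l0 : L) (C : (L -> Prop) -> (L -> Prop)) :
  C_logics C ->
  exists (M : Type) (sat : M -> L -> Prop) (f : (M -> Prop) -> (M -> Prop)),
    fC_choice f /\ restricted f /\
    forall A : L -> Prop, seteq (C A) (bar sat (f (hat sat A))).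
Proof.
  intros HC. pose proof HC as [Hi Hc].
  set (sat := fun (T : L -> Prop) (a : L) => T a).
  set (f := fun (X : (L -> Prop) -> Prop) (T : L -> Prop) =>
     X T /\ ((exists T', X T' /\ seteq T' (C (bar sat X))) -> seteq T (C (bar sat X)))).
  exists (L -> Prop), sat, f. split; [split|split].
  - intros X T [H _]; exact H.
  - intros X Y H1 H2 T.
    destruct (classic (exists T', X T' /\ seteq T' (C (bar sat X)))) as [E|E].
    + destruct E as [T0 [HX0 HT0]].
      assert (HY0 : Y T0).
      { apply H1. split; [exact HX0|]. intros _; exact HT0. }
      assert (Hs : seteq (C (bar sat X)) (C (bar sat Y))).
      { apply Hc.
        - intros a Ha T' HT'. apply Ha. apply H2. exact HT'.
        - intros a Ha. apply HT0. apply Ha. exact HY0. }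
      split.
      * intros [HYT HimpY]. split; [apply H2; exact HYT|].
        intros _.
        assert (EY : exists T', Y T' /\ seteq T' (C (bar sat Y))).
        { exists T0. split; [exact HY0|]. intro b. split; intro h.
          - apply Hs. apply HT0. exact h.
          - apply HT0. apply Hs. exact h. }
        pose proof (HimpY EY) as HTY. intro a. split; intro h.
        -- apply Hs. apply HTY. exact h.
        -- apply HTY. apply Hs. exact h.
      * intros HfX. pose proof (H1 T HfX) as HYT. split; [exact HYT|].
        destruct HfX as [_ Himp]. intros _ a.
        rewrite (Himp (ex_intro _ T0 (conj HX0 HT0)) a). apply Hs.
    + assert (HXY : forall T, X T -> Y T).
      { intros T' HT'. apply H1. split; [exact HT'|]. intros E'; contradiction. }
      assert (Hb : seteq (bar sat X) (bar sat Y)).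
      { intros a; split; intros Ha T' HT'; apply Ha; auto. }
      pose proof (C_ext C HC _ _ Hb) as Hs.
      split.
      * intros [HYT _]. split; [auto|]. intros E'; contradiction.
      * intros [HXT _]. split; [auto|]. intros [T' [HYT' HT']]. exfalso. apply E.
        exists T'. split; [auto|]. intro a. rewrite (HT' a). symmetry; apply Hs.
  - intros X H T HT.
    destruct (classic (exists T', X T' /\ seteq T' (C (bar sat X)))) as [E|E].
    + destruct E as [T' [HX' HT']]. apply (H T'). split; [exact HX'|]. intros _; exact HT'.
    + apply (H T). split; [exact HT|]. intros E'; contradiction.
  - intros A.
    assert (Hb : seteq (bar sat (hat sat A)) A).
    { intros a; split.
      - intros Ha. apply (Ha A). intros b Hb; exact Hb.
      - intros Ha T HT. apply HT. exact Ha. }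
    pose proof (C_ext C HC _ _ Hb) as Hs.
    assert (Wit : exists T', hat sat A T' /\ seteq T' (C (bar sat (hat sat A)))).
    { exists (C A). split.
      - intros b Hb'. apply Hi. exact Hb'.
      - intro b. symmetry. apply Hs. }
    intro a. split.
    + intros Ha T [HT Himp]. apply (Himp Wit a). apply Hs. exact Ha.
    + intros Ha. apply (Ha (C A)). split.
      * intros b Hb'. apply Hi. exact Hb'.
      * intros _ b. symmetry. apply Hs.
Qed.
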